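(* Let $\rho\in\mathbb R$ and let $\kappa_{\mathbf a}:\mathbb H_\rho\times\mathbb H_\rho\to\mathbb C$ be a positive semi-definite Dirichlet series kernel with associated reproducing kernel Hilbert space $\mathscr H_{\mathbf a}$. Then $\mathscr H_{\mathbf a,\infty}:=\{f\in\mathscr H_{\mathbf a}:\lim_{s\to\infty}f(s)=0\}$ is a closed subspace of $\mathscr H_{\mathbf a}$. If $\lim_{t\to\infty}\lim_{r\to\infty}\kappa_{\mathbf a}(t,r)\ne0$, then the reproducing kernel $\kappa_{\mathbf a,\infty}$ of $\mathscr H_{\mathbf a,\infty}$ is $$\kappa_{\mathbf a,\infty}(s,u)=\kappa_{\mathbf a}(s,u)-\frac{\lim_{r\to\infty}\kappa_{\mathbf a}(s,r)\,\lim_{t\to\infty}\kappa_{\mathbf a}(t,u)}{\lim_{t\to\infty}\lim_{r\to\infty}\kappa_{\mathbf a}(t,r)},\quad s,u\in\mathbb H_\rho.$$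
   Context: $\mathbb H_\rho=\{\Re s>\rho\}$. Limits $s,t,r\to\infty$ are taken along the positive real axis. $\kappa_{\mathbf a}(s,u)=\sum_{m,n\ge1}a_{m,n}m^{-s}n^{-\bar u}$ is a Dirichlet series kernel on $\mathbb H_\rho$ if $(s,u)\mapsto\kappa_{\mathbf a}(s,\bar u)$ is regularly convergent on $\mathbb H_\rho\times\mathbb H_\rho$ (the double series converges at each point and every row and column series converges there). $\mathscr H_{\mathbf a}$ is the Hilbert space of functions on $\mathbb H_\rho$ with $\kappa_{\mathbf a}(\cdot,t)\in\mathscr H_{\mathbf a}$ and $\langle f,\kappa_{\mathbf a}(\cdot,t)\rangle=f(t)$. *)

(* Defs.v *)
From HB Require Import structures.
From mathcomp Require Import all_boot all_order all_algebra.
From mathcomp Require Import all_classical all_reals all_analysis.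
From mathcomp Require Import complex.
Import Order.TTheory GRing.Theory Num.Theory.
Import numFieldNormedType.Exports.

Set Implicit Arguments.
Unset Strict Implicit.
Unset Printing Implicit Defensive.

Local Open Scope classical_set_scope.
Local Open Scope ring_scope.
Local Open Scope complex_scope.

Section Defs.
Variable R : realType.
Local Notation C := (R[i]).

Definition in_half (rho : R) (s : C) : Prop := rho < complex.Re s.

Definition limr (g : R -> C) : C := lim ((fun r => (g r : C^o)) @ +oo).
Definition cvgr_to (g : R -> C) (l : C) : Prop :=
  (fun r => (g r : C^o)) @ +oo --> (l : C^o).

Definition cexp (z : C) : C :=
  (expR (complex.Re z))%:C * ((cos (complex.Im z))%:C + 'i * (sin (complex.Im z))%:C).
Definition npow_neg (n : nat) (s : C) : C := cexp (- s * (ln (n%:R : R))%:C).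

Definition series1_cvg (u : nat -> C) : Prop :=
  exists l : C, forall e : R, 0 < e -> exists N : nat, forall K : nat,
    (N <= K)%N -> `| \sum_(1 <= n < K.+1) u n - l | < e%:C.

Definition psum2 (x : nat -> nat -> C) (M N : nat) : C :=
  \sum_(1 <= m < M.+1) \sum_(1 <= n < N.+1) x m n.

Definition dseries_cvg_to (x : nat -> nat -> C) (L : C) : Prop :=
  forall e : R, 0 < e -> exists N0 : nat, forall M N : nat,
    (N0 <= M)%N -> (N0 <= N)%N -> `| psum2 x M N - L | < e%:C.

Definition dseries_sum (x : nat -> nat -> C) : C := xget 0 (dseries_cvg_to x).

Definition regularly_convergent (x : nat -> nat -> C) : Prop :=
  (exists L, dseries_cvg_to x L) /\
  (forall m, (1 <= m)%N -> series1_cvg (fun n => x m n)) /\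
  (forall n, (1 <= n)%N -> series1_cvg (fun m => x m n)).

(** kappa_a is a Dirichlet series kernel on H_rho:
    (s,u) |-> kappa_a(s, conj u) = sum a_{m,n} m^{-s} n^{-u} is regularly
    convergent at every point of H_rho x H_rho *)
Definition dirichlet_series_kernel (rho : R) (a : nat -> nat -> C) : Prop :=
  forall s u, in_half rho s -> in_half rho u ->
    regularly_convergent (fun m n => a m n * npow_neg m s * npow_neg n u).

(** kappa_a(s,u) = sum_{m,n>=1} a_{m,n} m^{-s} n^{-conj u} on H_rho x H_rho;
    functions on H_rho are represented as functions on C that vanish
    outside H_rho (extension by zero). *)
Definition dkernel (rho : R) (a : nat -> nat -> C) (s u : C) : C :=
  if asbool (in_half rho s /\ in_half rho u)
  then dseries_sum (fun m n => a m n * npow_neg m s * npow_neg n (u^*))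
  else 0.

Definition psd_kernel (rho : R) (K : C -> C -> C) : Prop :=
  forall (n : nat) (s : 'I_n -> C) (c : 'I_n -> C),
    (forall i, in_half rho (s i)) ->
    0 <= \sum_(i < n) \sum_(j < n) (c i)^* * c j * K (s i) (s j).

(** Hilbert spaces of functions on H_rho (functions C -> C vanishing off H_rho),
    with inner product ip, linear in the first argument *)
Definition hnorm (ip : (C -> C) -> (C -> C) -> C) (f : C -> C) : R :=
  Num.sqrt (complex.Re (ip f f)).

Definition is_subspace (V : set (C -> C)) : Prop :=
  V (fun _ => 0) /\
  (forall f g, V f -> V g -> V (fun s => f s + g s)) /\
  (forall (c : C) f, V f -> V (fun s => c * f s)).

Definition hcvg_to (ip : (C -> C) -> (C -> C) -> C)
    (u : nat -> C -> C) (f : C -> C) : Prop :=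
  forall e : R, 0 < e -> exists N : nat, forall n : nat,
    (N <= n)%N -> hnorm ip (fun s => u n s - f s) < e.

Definition hilbert_space_on (rho : R) (H : set (C -> C))
    (ip : (C -> C) -> (C -> C) -> C) : Prop :=
  is_subspace H /\
  (forall f, H f -> forall s, ~ in_half rho s -> f s = 0) /\
  (forall f g h, H f -> H g -> H h ->
     ip (fun s => f s + g s) h = ip f h + ip g h) /\
  (forall (c : C) f g, H f -> H g -> ip (fun s => c * f s) g = c * ip f g) /\
  (forall f g, H f -> H g -> ip g f = (ip f g)^*) /\
  (forall f, H f -> 0 <= ip f f) /\
  (forall f, H f -> ip f f = 0 -> f = (fun _ => 0)) /\
  (forall u : nat -> C -> C, (forall n, H (u n)) ->
     (forall e : R, 0 < e -> exists N : nat, forall m n : nat,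
        (N <= m)%N -> (N <= n)%N -> hnorm ip (fun s => u m s - u n s) < e) ->
     exists2 f, H f & hcvg_to ip u f).

Definition reproducing_kernel_of (rho : R) (V : set (C -> C))
    (ip : (C -> C) -> (C -> C) -> C) (k : C -> C -> C) : Prop :=
  forall t, in_half rho t ->
    V (fun s => k s t) /\ forall f, V f -> ip f (fun s => k s t) = f t.

Definition is_rkhs (rho : R) (K : C -> C -> C) (H : set (C -> C))
    (ip : (C -> C) -> (C -> C) -> C) : Prop :=
  hilbert_space_on rho H ip /\ reproducing_kernel_of rho H ip K.

Definition closed_subspace (H : set (C -> C)) (ip : (C -> C) -> (C -> C) -> C)
    (V : set (C -> C)) : Prop :=
  [/\ V `<=` H, is_subspace V &
      forall (u : nat -> C -> C) f, (forall n, V (u n)) -> H f ->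
        hcvg_to ip u f -> V f].

Definition H_inf (H : set (C -> C)) : set (C -> C) :=
  [set f | H f /\ cvgr_to (fun r => f r%:C) 0].

End Defs.

(* Main.v *)
Require Import Defs.
From HB Require Import structures.
From mathcomp Require Import all_boot all_order all_algebra.
From mathcomp Require Import all_classical all_reals all_analysis.
From mathcomp Require Import complex.
From mathcomp Require Import ring lra.
Import Order.TTheory GRing.Theory Num.Theory.
Import numFieldNormedType.Exports.
Local Open Scope classical_set_scope.
Local Open Scope ring_scope.
Local Open Scope complex_scope.
Set Implicit Arguments.
Unset Strict Implicit.
Section S.
Variable R : realType.
Local Notation C := (R[i]).
Definition evlim (g : R -> C) (l : C) : Prop :=
  forall e : R, 0 < e -> exists T : R, forall r, T < r -> `|g r - l| < e%:C.

Lemma evlim_cvgr g l : evlim g l -> cvgr_to g l.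
Proof.
move=> H; apply/cvgrPdist_lt => -[ea eb]; rewrite ltcE /= => /andP[/eqP -> ea0].
have [T HT] := H ea ea0.
exists T; split; first exact: num_real.
by move=> x /HT; rewrite distrC.
Qed.

Lemma cvgr_evlim g l : cvgr_to g l -> evlim g l.
Proof.
move/cvgrPdist_lt => H e e0.
have [T [_ HT]] := H e%:C ltac:(by rewrite ltcR).
by exists T => r /HT; rewrite distrC.
Qed.

Lemma cvgr_limr (g : R -> C) (l : C) : cvgr_to g l -> limr g = l.
Proof. move=> H; apply: (cvg_lim _ H); exact: norm_hausdorff. Qed.

Lemma cvgr_uniq (g : R -> C) (l l' : C) : cvgr_to g l -> cvgr_to g l' -> l = l'.
Proof. by move=> /cvgr_limr <- /cvgr_limr <-. Qed.


Lemma conjD (x y : C) : conjc (x + y) = conjc x + conjc y. Proof. exact: rmorphD. Qed.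
Lemma conjB (x y : C) : conjc (x - y) = conjc x - conjc y. Proof. exact: rmorphB. Qed.
Lemma conjN (x : C) : conjc (- x) = - conjc x. Proof. exact: rmorphN. Qed.
Lemma conjM (x y : C) : conjc (x * y) = conjc x * conjc y. Proof. exact: rmorphM. Qed.

Section Hilb.
Variables (rho : R) (H : set (C -> C)) (ip : (C -> C) -> (C -> C) -> C).
Hypothesis hs : hilbert_space_on rho H ip.

Lemma H0 : H (fun _ => 0). Proof. by case: hs => -[]. Qed.
Lemma HD f g : H f -> H g -> H (fun s => f s + g s).
Proof. by case: hs => -[_ [HD _]] _; apply: HD. Qed.
Lemma HZ c f : H f -> H (fun s => c * f s).
Proof. by case: hs => -[_ [_ HZ]] _; apply: HZ. Qed.
Lemma HB f g : H f -> H g -> H (fun s => f s - g s).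
Proof.
move=> Hf Hg; have := HD Hf (HZ (-1) Hg).
by congr H; apply: funext => s; rewrite mulN1r.
Qed.
Lemma Hvan f s : H f -> ~ in_half rho s -> f s = 0.
Proof. by case: hs => _ [Hv _] Hf; apply: Hv. Qed.
Lemma ipD f g h : H f -> H g -> H h -> ip (fun s => f s + g s) h = ip f h + ip g h.
Proof. by case: hs => _ [_ [ipD _]]; apply: ipD. Qed.
Lemma ipZ c f g : H f -> H g -> ip (fun s => c * f s) g = c * ip f g.
Proof. by case: hs => _ [_ [_ [ipZ _]]]; apply: ipZ. Qed.
Lemma ipC f g : H f -> H g -> ip g f = conjc (ip f g).
Proof. by case: hs => _ [_ [_ [_ [ipC _]]]]; apply: ipC. Qed.
Lemma ip_ge0 f : H f -> 0 <= ip f f.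
Proof. by case: hs => _ [_ [_ [_ [_ [ipg _]]]]]; apply: ipg. Qed.
Lemma ip_eq0 f : H f -> ip f f = 0 -> f = (fun _ => 0).
Proof. by case: hs => _ [_ [_ [_ [_ [_ [ipe _]]]]]]; apply: ipe. Qed.

Lemma ip0l g : H g -> ip (fun _ => 0) g = 0.
Proof.
move=> Hg; have -> : (fun _ : C => 0 : C) = (fun s => 0 * g s).
  by apply: funext => s; rewrite mul0r.
by rewrite ipZ // mul0r.
Qed.
Lemma ip0r g : H g -> ip g (fun _ => 0) = 0.
Proof. by move=> Hg; rewrite ipC ?ip0l ?conjc0 //; exact: H0. Qed.
Lemma ipBl f g h : H f -> H g -> H h -> ip (fun s => f s - g s) h = ip f h - ip g h.
Proof.
move=> Hf Hg Hh.
have -> : (fun s => f s - g s) = (fun s => f s + (fun s => -1 * g s) s).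
  by apply: funext => s; rewrite mulN1r.
by rewrite ipD ?ipZ ?mulN1r //; exact: HZ.
Qed.
Lemma ipDr f g h : H f -> H g -> H h -> ip h (fun s => f s + g s) = ip h f + ip h g.
Proof.
move=> Hf Hg Hh; rewrite (ipC (HD Hf Hg) Hh) ipD // conjD -(ipC Hf Hh) -(ipC Hg Hh) //.
Qed.
Lemma ipZr c f g : H f -> H g -> ip g (fun s => c * f s) = conjc c * ip g f.
Proof.
move=> Hf Hg; rewrite (ipC (HZ c Hf) Hg) ipZ // conjM -(ipC Hf Hg) //.
Qed.
Lemma ipBr f g h : H f -> H g -> H h -> ip h (fun s => f s - g s) = ip h f - ip h g.
Proof.
move=> Hf Hg Hh; rewrite (ipC (HB Hf Hg) Hh) ipBl // conjB -(ipC Hf Hh) -(ipC Hg Hh) //.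
Qed.

Lemma ip_real f : H f -> ip f f = (complex.Re (ip f f))%:C.
Proof.
move=> /ip_ge0; case: (ip f f) => x y; rewrite lecE /= => /andP[/eqP -> _] //.
Qed.

Lemma hnorm_sqr f : H f -> (hnorm ip f) ^+ 2 = complex.Re (ip f f).
Proof.
move=> Hf; rewrite /hnorm sqr_sqrtr //.
by move: (ip_ge0 Hf); rewrite lecE => /andP[].
Qed.

Lemma CS f g : H f -> H g -> `|ip f g| <= (hnorm ip f * hnorm ip g)%:C.
Proof.
move=> Hf Hg.
have nn : 0 <= (hnorm ip f * hnorm ip g)%:C.
  by rewrite ler0c mulr_ge0 // sqrtr_ge0.
have [g0|gn0] := eqVneq (ip g g) 0.
  have -> : ip f g = 0 by rewrite (ip_eq0 Hg g0) ip0r.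
  by rewrite normr0.
set B := ip f g; set Cc := ip g g; set A := ip f f.
have Cpos : 0 < Cc by rewrite lt_def gn0 ip_ge0.
have CcJ : conjc Cc = Cc by rewrite /Cc ip_real // conjc_real.
set lam := B / Cc.
set v := fun s => f s + (fun s => - lam * g s) s.
have Hv : H v by apply: HD => //; exact: HZ.
have : 0 <= ip v v by exact: ip_ge0.
rewrite /v ipD ?ipZ ?ipDr ?ipZr //; try exact: HZ.
rewrite (ipC Hf Hg) -/A -/B -/Cc.
have -> : A + conjc (- lam) * B + - lam * (conjc B + conjc (- lam) * Cc) = A - B * conjc B / Cc.
  rewrite /lam conjN conjM conjc_inv CcJ.
  field; exact: gn0.
rewrite subr_ge0 ler_pdivrMr // -sqr_normc => Hle.
rewrite -(ler_sqr (normr_ge0 _) nn).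
apply: (le_trans Hle).
rewrite -rmorphXn exprMn !hnorm_sqr // rmorphM /= -!ip_real //.
Qed.

End Hilb.

Section Abel.
Definition Phi (a : nat) (x : nat -> C) (M : nat) (F : nat -> C) : C :=
  \sum_(a <= j < M.+1) (x j - x j.+1) * F j + x M.+1 * F M.

Lemma abel1 (x u : nat -> C) M :
  \sum_(1 <= m < M.+1) u m * x m = Phi 1 x M (fun j => \sum_(1 <= m < j.+1) u m).
Proof.
elim: M => [|M IH]; first by rewrite /Phi !big_geq // mulr0 addr0.
rewrite /Phi in IH *.
rewrite big_nat_recr //= IH.
rewrite [\sum_(1 <= j < M.+2) _]big_nat_recr //=.
rewrite [\sum_(1 <= m < M.+2) u m]big_nat_recr //=.
ring.
Qed.

Lemma Phi_split a x M F : (a <= M)%N ->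
  Phi a x M F = (x a - x a.+1) * F a + Phi a.+1 x M F.
Proof. by move=> aM; rewrite /Phi big_ltn ?ltnS // addrA. Qed.

Lemma PhiB a x M F G :
  Phi a x M (fun j => F j - G j) = Phi a x M F - Phi a x M G.
Proof.
rewrite /Phi; under eq_bigr do rewrite mulrBr.
rewrite sumrB; ring.
Qed.

Lemma sum_delta a M (x : nat -> C) : (a <= M.+1)%N ->
  \sum_(a <= j < M.+1) (x j - x j.+1) = x a - x M.+1.
Proof.
move=> aM; rewrite -(opprB (x M.+1)) -telescope_sumr // -sumrN.
by apply: eq_bigr => j _; rewrite opprB.
Qed.

Lemma Phi_const a x M z : (a <= M.+1)%N -> Phi a x M (fun _ => z) = x a * z.
Proof. by move=> aM; rewrite /Phi -mulr_suml sum_delta //; ring. Qed.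

Lemma Phi_sum (I : Type) (r : seq I) a x M (F : I -> nat -> C) :
  Phi a x M (fun k => \sum_(i <- r) F i k) = \sum_(i <- r) Phi a x M (F i).
Proof.
rewrite /Phi big_split /=; congr (_ + _); last by rewrite mulr_sumr.
under eq_bigr do rewrite mulr_sumr.
exact: exchange_big.
Qed.

Lemma Phi_bound a x M F b : (1 <= a)%N -> (a <= M.+1)%N -> (1 <= M)%N ->
  (forall j, (1 <= j)%N -> 0 <= x j.+1 /\ x j.+1 <= x j) ->
  (forall j, (1 <= j <= M)%N -> `|F j| <= b) ->
  `|Phi a x M F| <= x a * b.
Proof.
move=> a1 aM M1 Hx HF.
have HxM : 0 <= x M.+1 by case: (Hx M M1).
rewrite /Phi; apply: (le_trans (ler_normD _ _)).
have -> : x a * b = \sum_(a <= j < M.+1) (x j - x j.+1) * b + x M.+1 * b.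
  by rewrite -mulr_suml sum_delta //; ring.
apply: lerD.
  apply: (le_trans (ler_norm_sum _ _ _)).
  rewrite big_nat [X in _ <= X]big_nat; apply: ler_sum => j /andP[aj jM].
  have j1 : (1 <= j)%N by apply: leq_trans aj.
  have dj : 0 <= x j - x j.+1 by rewrite subr_ge0; case: (Hx j j1).
  rewrite normrM (ger0_norm dj); apply: ler_wpM2l => //.
  by apply: HF; rewrite j1 -ltnS.
rewrite normrM (ger0_norm HxM); apply: ler_wpM2l => //.
by apply: HF; rewrite M1 leqnn.
Qed.

Lemma Phi_first x M F b : (1 <= M)%N -> x 1%N = 1 ->
  (forall j, (1 <= j)%N -> 0 <= x j.+1 /\ x j.+1 <= x j) ->
  (forall j, (1 <= j <= M)%N -> `|F j - F 1%N| <= b) ->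
  `|Phi 1 x M F - F 1%N| <= x 2%N * b.
Proof.
move=> M1 x1 Hx HF.
have -> : Phi 1 x M F - F 1%N = Phi 1 x M (fun j => F j - F 1%N).
  by rewrite PhiB Phi_const // x1 mul1r.
rewrite Phi_split // subrr mulr0 add0r.
exact: Phi_bound.
Qed.

Lemma abel2 (c : nat -> nat -> C) (x y : nat -> C) (B : C) M N :
  (1 <= M)%N -> (1 <= N)%N -> x 1%N = 1 -> y 1%N = 1 ->
  (forall j, (1 <= j)%N -> 0 <= x j.+1 /\ x j.+1 <= x j) ->
  (forall j, (1 <= j)%N -> 0 <= y j.+1 /\ y j.+1 <= y j) ->
  (forall m n, (1 <= m)%N -> (1 <= n)%N -> `|psum2 c m n| <= B) ->
  `|psum2 (fun m n => c m n * x m * y n) M N - c 1%N 1%N| <= B *+ 2 * (x 2%N + y 2%N).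
Proof.
move=> M1 N1 x1 y1 Hx Hy HB.
have E : psum2 (fun m n => c m n * x m * y n) M N =
    Phi 1 y N (fun k => Phi 1 x M (fun j => psum2 c j k)).
  rewrite /psum2.
  under eq_bigr do rewrite abel1.
  rewrite -Phi_sum; congr (Phi _ _ _ _); apply: funext => k.
  under eq_bigr do rewrite -mulr_suml.
  by rewrite abel1.
have c11 : c 1%N 1%N = psum2 c 1 1 by rewrite /psum2 !big_nat1.
have B2 : forall m n m' n', (1 <= m)%N -> (1 <= n)%N -> (1 <= m')%N -> (1 <= n')%N ->
    `|psum2 c m n - psum2 c m' n'| <= B *+ 2.
  move=> m n m' n' m1 n1 m1' n1'; apply: (le_trans (ler_normB _ _)).
  by rewrite mulr2n lerD ?HB.
rewrite E c11.
set G := fun k => Phi 1 x M (fun j => psum2 c j k).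
set S1 := fun k => psum2 c 1 k.
have -> : Phi 1 y N G - psum2 c 1 1 =
    Phi 1 y N (fun k => G k - S1 k) + (Phi 1 y N S1 - S1 1%N).
  by rewrite PhiB; rewrite /S1; ring.
apply: (le_trans (ler_normD _ _)).
rewrite mulrDr; apply: lerD.
  rewrite -[B *+ 2 * x 2%N]mul1r -y1.
  apply: Phi_bound => // k /andP[k1 _].
  rewrite mulrC; apply: Phi_first => // j /andP[j1 _].
  exact: B2.
rewrite mulrC; apply: Phi_first => // k /andP[k1 _].
exact: B2.
Qed.
End Abel.

Lemma realCE (t l : R) : - (t%:C) * (l%:C) = (- t * l)%:C :> C.
Proof. by rewrite -rmorphN -rmorphM. Qed.

Lemma npow_real (n : nat) (t : R) :
  npow_neg n t%:C = (expR (- t * ln (n%:R : R)))%:C.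
Proof.
rewrite /npow_neg /cexp realCE /= cos0 sin0 mulr0 addr0.
by simpc.
Qed.

Lemma fin_bound (f : nat -> C) N : exists b, 0 <= b /\ forall K, (K < N)%N -> `|f K| <= b.
Proof.
elim: N => [|N [b [b0 Hb]]]; first by exists 0; split.
exists (b + `|f N|); split; first by rewrite addr_ge0.
move=> K; rewrite ltnS leq_eqVlt => /orP[/eqP ->|KN].
  by rewrite lerDr.
by apply: (le_trans (Hb K KN)); rewrite lerDl.
Qed.

Lemma ev_bound (f : nat -> C) N b1 : 0 <= b1 ->
  (forall K, (N <= K)%N -> `|f K| <= b1) ->
  exists b, 0 <= b /\ forall K, `|f K| <= b.
Proof.
move=> b10 H1; have [b0 [b00 H0]] := fin_bound f N.
exists (b1 + b0); split; first by rewrite addr_ge0.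
move=> K; case: (leqP N K) => [/H1 h|/H0 h].
  by apply: (le_trans h); rewrite lerDl.
by apply: (le_trans h); rewrite lerDr.
Qed.

Lemma series_bound (u : nat -> C) : series1_cvg u ->
  exists b, 0 <= b /\ forall K, `|\sum_(1 <= n < K.+1) u n| <= b.
Proof.
move=> [l Hl]; have [N HN] := Hl 1 ltr01.
apply: (ev_bound (b1 := `|l| + 1)); first by rewrite addr_ge0.
move=> K /HN h.
rewrite -[X in `|X|](subrK l); apply: (le_trans (ler_normD _ _)).
by rewrite addrC lerD2l ltW.
Qed.

Lemma sum_mono_nat (F : nat -> C) m n : (forall i, 0 <= F i) -> (m <= n)%N ->
  \sum_(1 <= i < m) F i <= \sum_(1 <= i < n) F i.
Proof.
move=> F0 mn; case: (leqP m 1) => [m1|m1].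
  by rewrite big_geq // sumr_ge0.
rewrite [X in _ <= X](big_cat_nat _ (n:=m)) //=; last exact: ltnW.
by rewrite lerDl sumr_ge0.
Qed.

Lemma psum2_bound (c : nat -> nat -> C) : regularly_convergent c ->
  exists B, 0 <= B /\ forall m n, (1 <= m)%N -> (1 <= n)%N -> `|psum2 c m n| <= B.
Proof.
move=> [[L HL] [Hrow Hcol]].
have [N0 HN0] := HL 1 ltr01.
have /choice [br Hbr] : forall i, exists b, 0 <= b /\ ((1 <= i)%N ->
    forall K, `|\sum_(1 <= n < K.+1) c i n| <= b).
  move=> i; case: (leqP 1 i) => i1.
    by have [b [b0 Hb]] := series_bound (Hrow i i1); exists b; split.
  by exists 0; split => //; rewrite leqNgt i1.
have /choice [bc Hbc] : forall j, exists b, 0 <= b /\ ((1 <= j)%N ->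
    forall K, `|\sum_(1 <= m < K.+1) c m j| <= b).
  move=> j; case: (leqP 1 j) => j1.
    by have [b [b0 Hb]] := series_bound (Hcol j j1); exists b; split.
  by exists 0; split => //; rewrite leqNgt j1.
exists (`|L| + 1 + \sum_(1 <= i < N0) br i + \sum_(1 <= j < N0) bc j).
have br0 : forall i, 0 <= br i by move=> i; case: (Hbr i).
have bc0 : forall i, 0 <= bc i by move=> i; case: (Hbc i).
have sbr : 0 <= \sum_(1 <= i < N0) br i by rewrite sumr_ge0.
have sbc : 0 <= \sum_(1 <= i < N0) bc i by rewrite sumr_ge0.
split; first by rewrite !addr_ge0.
move=> m n m1 n1.
case: (leqP N0 m) => mN; case: (leqP N0 n) => nN.
- have h := HN0 m n mN nN.
  have : `|psum2 c m n| <= `|L| + 1.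
    rewrite -[X in `|X|](subrK L); apply: (le_trans (ler_normD _ _)).
    by rewrite addrC lerD2l ltW.
  move/le_trans; apply.
  by rewrite -addrA lerDl addr_ge0.
- have -> : psum2 c m n = \sum_(1 <= j < n.+1) \sum_(1 <= i < m.+1) c i j.
    by rewrite /psum2; apply: exchange_big.
  apply: (le_trans (ler_norm_sum _ _ _)).
  apply: (@le_trans _ _ (\sum_(1 <= j < n.+1) bc j)).
    rewrite big_nat [X in _ <= X]big_nat; apply: ler_sum => j /andP[j1 _].
    by case: (Hbc j) => _ /(_ j1 m).
  apply: (@le_trans _ _ (\sum_(1 <= j < N0) bc j)); first exact: sum_mono_nat.
  by rewrite lerDr !addr_ge0.
- apply: (le_trans (ler_norm_sum _ _ _)).
  apply: (@le_trans _ _ (\sum_(1 <= i < m.+1) br i)).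
    rewrite big_nat [X in _ <= X]big_nat; apply: ler_sum => i /andP[i1 _].
    by case: (Hbr i) => _ /(_ i1 n).
  apply: (@le_trans _ _ (\sum_(1 <= i < N0) br i)); first exact: sum_mono_nat.
  apply: (@le_trans _ _ (`|L| + 1 + \sum_(1 <= i < N0) br i)).
    by rewrite lerDr addr_ge0.
  by rewrite lerDl.
- apply: (le_trans (ler_norm_sum _ _ _)).
  apply: (@le_trans _ _ (\sum_(1 <= i < m.+1) br i)).
    rewrite big_nat [X in _ <= X]big_nat; apply: ler_sum => i /andP[i1 _].
    by case: (Hbr i) => _ /(_ i1 n).
  apply: (@le_trans _ _ (\sum_(1 <= i < N0) br i)); first exact: sum_mono_nat.
  apply: (@le_trans _ _ (`|L| + 1 + \sum_(1 <= i < N0) br i)).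
    by rewrite lerDr addr_ge0.
  by rewrite lerDl.
Qed.

Lemma ge0_realE (z : C) : 0 <= z -> z = (complex.Re z)%:C.
Proof. by case: z => x y; rewrite lecE /= => /andP[/eqP -> _]. Qed.

Lemma small_exp (d al : R) : 0 < d -> (d * ln (2%:R : R))^-1 < al ->
  expR (- al * ln (2%:R : R)) < d.
Proof.
move=> d0 hal.
have l2 : 0 < ln (2%:R : R) by rewrite ln_gt0 // ltr1n.
have dl : 0 < d * ln (2%:R : R) by rewrite mulr_gt0.
have h1 : 1 < al * (d * ln (2%:R : R)).
  by rewrite -ltr_pdivrMr // div1r.
have h2 : al * ln (2%:R : R) < expR (al * ln (2%:R : R)).
  apply: (lt_le_trans _ (expR_ge1Dx _)); by rewrite ltrDr.
rewrite mulNr expRN -[X in X < _]div1r ltr_pdivrMr ?expR_gt0 //.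
apply: (lt_trans h1).
by rewrite mulrCA ltr_pM2l.
Qed.

Lemma npow_shift (m : nat) (t s0 : R) :
  npow_neg m t%:C = npow_neg m s0%:C * (expR (- (t - s0) * ln (m%:R : R)))%:C.
Proof.
rewrite !npow_real -rmorphM -expRD; congr (_%:C); congr expR; ring.
Qed.

Lemma kernel_lim rho (a : nat -> nat -> C) : dirichlet_series_kernel rho a ->
  exists L : C, forall e : R, 0 < e -> exists T : R, rho < T /\
    forall t r : R, T < t -> T < r -> `|dkernel rho a t%:C r%:C - L| < e%:C.
Proof.
move=> Hd.
set s0 := rho + 1.
have rs0 : rho < s0 by rewrite /s0 ltrDl.
have hs0 : in_half rho s0%:C by [].
set c := fun m n => a m n * npow_neg m s0%:C * npow_neg n s0%:C.
have Hc : regularly_convergent c by exact: (Hd _ _ hs0 hs0).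
have [B [B0 HB]] := psum2_bound Hc.
set Br := complex.Re B.
have BE : B = Br%:C by exact: ge0_realE.
have Br0 : 0 <= Br by rewrite -lecR -BE.
exists (c 1%N 1%N) => e e0.
set d := e / (8 * Br + 8).
have d0 : 0 < d by rewrite /d divr_gt0 // ltr_wpDl // mulr_ge0.
have hd : d * (8 * Br + 8) = e by rewrite /d divfK // gt_eqF // ltr_wpDl // mulr_ge0.
set T := s0 + (d * ln (2%:R : R))^-1.
have l2 : 0 < ln (2%:R : R) by rewrite ln_gt0 // ltr1n.
have Ts0 : s0 < T by rewrite /T ltrDl invr_gt0 mulr_gt0.
exists T; split; first exact: lt_trans Ts0.
move=> t r tT rT.
have ht : in_half rho t%:C by rewrite /in_half /=; apply: lt_trans tT; exact: lt_trans Ts0.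
have hr : in_half rho r%:C by rewrite /in_half /=; apply: lt_trans rT; exact: lt_trans Ts0.
have hb : in_half rho t%:C /\ in_half rho r%:C by split.
rewrite /dkernel (asboolT hb) conjc_real.
set term := fun m n => a m n * npow_neg m t%:C * npow_neg n r%:C.
have [[V HV] _] : regularly_convergent term by exact: Hd.
have HV' := xgetPex 0 (ex_intro _ V HV).
rewrite -/(dseries_sum term) in HV'.
set V' := dseries_sum term in HV' *.
set x := fun m : nat => (expR (- (t - s0) * ln (m%:R : R)))%:C.
set y := fun m : nat => (expR (- (r - s0) * ln (m%:R : R)))%:C.
have Eterm : term = fun m n => c m n * x m * y n.
  apply: funext => m; apply: funext => n.
  rewrite /term /c /x /y (npow_shift m t s0) (npow_shift n r s0); ring.
have e20 : 0 < e / 2 by rewrite divr_gt0.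
have [N0 HN0] := HV' (e / 2) e20.
set M := maxn N0 1.
have M1 : (1 <= M)%N by rewrite leq_max leqnn orbT.
have MN0 : (N0 <= M)%N by rewrite leq_max leqnn.
have h1 := HN0 M M MN0 MN0.
have mono : forall (al : R), 0 < al -> forall j, (1 <= j)%N ->
    0 <= (expR (- al * ln (j.+1%:R : R)))%:C /\
    (expR (- al * ln (j.+1%:R : R)))%:C <= (expR (- al * ln (j%:R : R)))%:C.
  move=> al al0 j j1; split; first by rewrite ler0c expR_ge0.
  rewrite lecR ler_expR !mulNr lerN2 ler_pM2l // ler_ln ?ler_nat //.
    by rewrite posrE ltr0n.
  by rewrite posrE ltr0n.
have al1 : 0 < t - s0 by rewrite subr_gt0; exact: lt_trans tT.
have al2 : 0 < r - s0 by rewrite subr_gt0; exact: lt_trans rT.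
have one1 : forall al : R, (expR (- al * ln (1%:R : R)))%:C = 1 :> C.
  by move=> al; rewrite (_ : (1%:R : R) = 1) // ln1 mulr0 expR0.
have h2 := @abel2 c x y B M M M1 M1 (one1 _) (one1 _) (mono _ al1) (mono _ al2) HB.
rewrite -Eterm in h2.
have x2 : expR (- (t - s0) * ln (2%:R : R)) < d.
  apply: small_exp => //; by rewrite ltrBrDl.
have y2 : expR (- (r - s0) * ln (2%:R : R)) < d.
  apply: small_exp => //; by rewrite ltrBrDl.
have h3 : B *+ 2 * (x 2%N + y 2%N) < (e / 2)%:C.
  rewrite BE /x /y -rmorphMn -rmorphD -rmorphM ltcR.
  set X2 := expR _ in x2 *; set Y2 := expR _ in y2 *.
  have X0 : 0 <= X2 by rewrite expR_ge0.
  have Y0 : 0 <= Y2 by rewrite expR_ge0.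
  rewrite mulr2n.
  nra.
apply: (le_lt_trans (ler_distD (psum2 term M M) _ _)).
have -> : e%:C = (e / 2)%:C + (e / 2)%:C :> C by rewrite -rmorphD -splitr.
apply: ltrD; first by rewrite distrC.
exact: le_lt_trans h2 h3.
Qed.

Lemma small_eq0 (z : C) : (forall e : R, 0 < e -> `|z| < e%:C) -> z = 0.
Proof.
move=> Hz; apply/eqP; rewrite -normr_eq0.
have E := ge0_realE (normr_ge0 z).
set r := complex.Re `|z| in E.
have r0 : 0 <= r by rewrite -lecR -E; exact: normr_ge0.
case: (ltrP 0 r) => [rp|rn].
  by have := Hz r rp; rewrite {1}E ltxx.
have r00 : r = 0 by apply/eqP; rewrite eq_le rn r0.
by rewrite E r00.
Qed.

Lemma evlim_conj g l : evlim g l -> evlim (fun r => conjc (g r)) (conjc l).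
Proof.
move=> H e e0; have [T HT] := H e e0; exists T => r /HT.
by rewrite -conjB normcJ.
Qed.

Lemma evlim_ext g1 g2 l T0 : (forall r, T0 < r -> g1 r = g2 r) -> evlim g1 l -> evlim g2 l.
Proof.
move=> E H e e0; have [T HT] := H e e0; exists (Num.max T T0) => r.
rewrite gt_max => /andP[rT rT0]; rewrite -E //; exact: HT.
Qed.

Lemma evlim_uniq g l l' : evlim g l -> evlim g l' -> l = l'.
Proof. by move=> /evlim_cvgr h1 /evlim_cvgr h2; exact: cvgr_uniq h1 h2. Qed.

Lemma evlim_cst (z : C) : evlim (fun _ => z) z.
Proof. by move=> e e0; exists 0 => r _; rewrite subrr normr0 ltcR. Qed.

Lemma exists_nat (T : R) : exists N : nat, T < N%:R.
Proof.
exists (Num.bound `|T|); apply: (le_lt_trans (ler_norm T)).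
exact: archi_boundP.
Qed.

Section Main.
Variables (rho : R) (a : nat -> nat -> C) (H : set (C -> C))
  (ip : (C -> C) -> (C -> C) -> C).
Hypothesis Hd : dirichlet_series_kernel rho a.
Hypothesis Hrk : is_rkhs rho (dkernel rho a) H ip.
Local Notation k := (dkernel rho a).

Let hs : hilbert_space_on rho H ip. Proof. by case: Hrk. Qed.

Lemma k_out_r s t : ~ in_half rho t -> k s t = 0.
Proof.
move=> ht; rewrite /dkernel asboolF //; by case.
Qed.
Lemma k_out_l s t : ~ in_half rho s -> k s t = 0.
Proof.
move=> ht; rewrite /dkernel asboolF //; by case.
Qed.

Lemma Hk t : H (fun s => k s t).
Proof.
case: (pselect (in_half rho t)) => ht.
  by case: Hrk => _ /(_ t ht) [].
have -> : (fun s => k s t) = (fun _ => 0) by apply: funext => s; exact: k_out_r.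
exact: H0 hs.
Qed.

Lemma krep t f : in_half rho t -> H f -> ip f (fun s => k s t) = f t.
Proof. by move=> ht Hf; case: Hrk => _ /(_ t ht) [_]; apply. Qed.

Lemma kip s t : in_half rho s -> ip (fun x => k x t) (fun x => k x s) = k s t.
Proof. by move=> hs'; rewrite krep //; exact: Hk. Qed.

Lemma kherm s t : in_half rho s -> in_half rho t -> k t s = conjc (k s t).
Proof.
move=> hs' ht; rewrite -(kip s ht) -(kip t hs') (ipC hs) //; exact: Hk.
Qed.

Lemma hnorm_lt f e : H f -> 0 < e -> `|ip f f| < (e ^+ 2)%:C -> hnorm ip f < e.
Proof.
move=> Hf e0 h; rewrite /hnorm -[X in _ < X](@gtr0_norm _ e) // -sqrtr_sqr ltr_sqrt ?exprn_gt0 //.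
rewrite -ltcR -(ip_real hs Hf) -(ger0_norm (ip_ge0 hs Hf)) //.
Qed.

Lemma cauchy_k : forall e : R, 0 < e -> exists T : R, rho < T /\ forall p q : R, T < p -> T < q ->
  hnorm ip (fun s => k s p%:C - k s q%:C) < e.
Proof.
have [L HL] := kernel_lim Hd.
move=> e e0.
have e4 : 0 < e ^+ 2 / 4%:R by rewrite divr_gt0 // exprn_gt0.
have [T [rT HT]] := HL _ e4.
exists T; split => // p q pT qT.
have hp : in_half rho p%:C by rewrite /in_half /=; exact: lt_trans pT.
have hq : in_half rho q%:C by rewrite /in_half /=; exact: lt_trans qT.
apply: hnorm_lt => //; first by apply: (HB hs); exact: Hk.
rewrite (ipBl hs) ?(ipBr hs) //; try (by exact: Hk); try (by apply: (HB hs); exact: Hk).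
rewrite !kip //.
have -> : k p%:C p%:C - k q%:C p%:C - (k p%:C q%:C - k q%:C q%:C) =
  (k p%:C p%:C - L) - (k q%:C p%:C - L) - ((k p%:C q%:C - L) - (k q%:C q%:C - L)) by ring.
have -> : ((e ^+ 2)%:C : C) = (e ^+ 2 / 4%:R)%:C + (e ^+ 2 / 4%:R)%:C + ((e ^+ 2 / 4%:R)%:C + (e ^+ 2 / 4%:R)%:C).
  rewrite -!rmorphD; congr (_%:C); by field.
apply: (le_lt_trans (ler_normB _ _)); apply: ltrD;
  (apply: (le_lt_trans (ler_normB _ _)); apply: ltrD); exact: HT.
Qed.

Lemma g_exists : exists2 g, H g &
  forall f, H f -> evlim (fun r => ip f (fun s => k s r%:C)) (ip f g).
Proof.
have Hcomp : forall u : nat -> C -> C, (forall n, H (u n)) ->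
     (forall e : R, 0 < e -> exists N : nat, forall m n : nat,
        (N <= m)%N -> (N <= n)%N -> hnorm ip (fun s => u m s - u n s) < e) ->
     exists2 f, H f & hcvg_to ip u f.
  by case: hs => _ [_ [_ [_ [_ [_ [_ hc]]]]]].
set u := fun (n : nat) s => k s (n%:R : R)%:C.
have [g Hg Hcv] : exists2 g, H g & hcvg_to ip u g.
  apply: Hcomp; first by move=> n; exact: Hk.
  move=> e e0; have [T [_ HT]] := cauchy_k e0.
  have [N HN] := exists_nat T.
  exists N => m n mN nN; apply: HT.
    by apply: (lt_le_trans HN); rewrite ler_nat.
  by apply: (lt_le_trans HN); rewrite ler_nat.
exists g => // f Hf e e0.
set hf := hnorm ip f.
have hf0 : 0 <= hf by exact: sqrtr_ge0.
set e' := e / (2 * (hf + 1)).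
have e'0 : 0 < e' by rewrite divr_gt0 // mulr_gt0 // ltr_wpDl.
have he' : e' * (2 * (hf + 1)) = e by rewrite divfK // gt_eqF // mulr_gt0 // ltr_wpDl.
have [T1 [_ HT1]] := cauchy_k e'0.
have [N1 HN1] := Hcv e' e'0.
have [N2 HN2] := exists_nat T1.
set n := maxn N1 N2.
have nT : T1 < n%:R.
  by apply: (lt_le_trans HN2); rewrite ler_nat leq_max leqnn orbT.
have h1 := HN1 n (leq_maxl _ _).
exists T1 => p pT.
have h2 := HT1 p n%:R pT nT.
have Hkp := Hk p%:C.
have Hun : H (u n) by exact: Hk.
have -> : ip f (fun s => k s p%:C) - ip f g =
    ip f (fun s => k s p%:C - u n s) + ip f (fun s => u n s - g s).
  by rewrite !(ipBr hs) //; ring.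
apply: (le_lt_trans (ler_normD _ _)).
apply: (le_lt_trans (lerD (CS hs Hf (HB hs Hkp Hun)) (CS hs Hf (HB hs Hun Hg)))).
rewrite -rmorphD ltcR.
rewrite -/hf.
set a1 := hnorm ip _ in h2 *.
set a2 := hnorm ip _ in h1 *.
have a10 : 0 <= a1 by exact: sqrtr_ge0.
have a20 : 0 <= a2 by exact: sqrtr_ge0.
nra.
Qed.

Section G.
Variable g : C -> C.
Hypothesis Hg : H g.
Hypothesis Hgl : forall f, H f -> evlim (fun r => ip f (fun s => k s r%:C)) (ip f g).

Lemma f_lim f : H f -> evlim (fun r => f r%:C) (ip f g).
Proof.
move=> Hf; apply: (evlim_ext (T0 := rho) (g1 := fun r => ip f (fun s => k s r%:C))) (Hgl Hf).
move=> r hr; have hr' : in_half rho r%:C := hr.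
by rewrite krep.
Qed.

Lemma G1 s : evlim (fun r => k s r%:C) (g s).
Proof.
case: (pselect (in_half rho s)) => hs'.
  have h := evlim_conj (Hgl (Hk s)).
  rewrite -(ipC hs (Hk s) Hg) (krep hs' Hg) in h.
  apply: (evlim_ext (T0 := rho)) h => r hr.
  have hr' : in_half rho r%:C := hr.
  rewrite krep //; last exact: Hk.
  by rewrite (kherm hr' hs').
rewrite (Hvan hs Hg hs').
apply: (evlim_ext (T0 := rho)) (evlim_cst (0 : C)) => r _.
by rewrite k_out_l.
Qed.

Lemma G2 u : in_half rho u -> evlim (fun t => k t%:C u) (conjc (g u)).
Proof.
move=> hu; apply: (evlim_ext (T0 := rho)) (evlim_conj (G1 u)) => t ht.
have ht' : in_half rho t%:C := ht.
by rewrite (kherm hu ht').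
Qed.

Lemma Hinf_iff f : H_inf H f <-> H f /\ ip f g = 0.
Proof.
split.
  move=> [Hf Hc]; split => //.
  apply: (evlim_uniq (f_lim Hf)); exact: cvgr_evlim.
move=> [Hf H0']; split => //; apply: evlim_cvgr; rewrite -H0'; exact: f_lim.
Qed.

Lemma part1 : closed_subspace H ip (H_inf H).
Proof.
split.
- by move=> f [].
- split; [|split].
  + by apply/Hinf_iff; split; [exact: H0 hs| exact: (ip0l hs Hg)].
  + move=> f1 f2 /Hinf_iff [H1 e1] /Hinf_iff [H2 e2]; apply/Hinf_iff; split.
      exact: (HD hs H1 H2).
    by rewrite (ipD hs) // e1 e2 addr0.
  + move=> c f /Hinf_iff [H1 e1]; apply/Hinf_iff; split; first exact: (HZ hs c H1).
    by rewrite (ipZ hs) // e1 mulr0.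
- move=> u f Hu Hf Hcv; apply/Hinf_iff; split => //.
  apply: small_eq0 => e e0.
  set hg := hnorm ip g.
  have hg0 : 0 <= hg by exact: sqrtr_ge0.
  set e' := e / (hg + 1).
  have e'0 : 0 < e' by rewrite divr_gt0 // ltr_wpDl.
  have he' : e' * (hg + 1) = e by rewrite divfK // gt_eqF // ltr_wpDl.
  have [N HN] := Hcv e' e'0.
  have [HuN eN] := (Hinf_iff (u N)).1 (Hu N).
  have h1 := HN N (leqnn N).
  have -> : ip f g = - ip (fun s => u N s - f s) g.
    by rewrite (ipBl hs) // eN sub0r opprK.
  rewrite normrN; apply: (le_lt_trans (CS hs (HB hs HuN Hf) Hg)).
  rewrite ltcR -/hg.
  set a1 := hnorm ip _ in h1 *.
  have a10 : 0 <= a1 by exact: sqrtr_ge0.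
  nra.
Qed.


Lemma part2 : limr (fun t => limr (fun r => k t%:C r%:C)) != 0 ->
  reproducing_kernel_of rho (H_inf H) ip
     (fun s u => k s u
        - limr (fun r => k s r%:C)
          * limr (fun t => k t%:C u)
          / limr (fun t => limr (fun r => k t%:C r%:C))).
Proof.
have E1 : forall s, limr (fun r => k s r%:C) = g s.
  by move=> s; apply: cvgr_limr; apply: evlim_cvgr; exact: G1.
have Ecg : limr (fun t => limr (fun r => k t%:C r%:C)) = ip g g.
  have -> : (fun t => limr (fun r => k t%:C r%:C)) = (fun t => g t%:C).
    by apply: funext => t; exact: E1.
  by apply: cvgr_limr; apply: evlim_cvgr; exact: f_lim.
rewrite Ecg => cg0 t ht; cbv beta.
have E2 : limr (fun t' => k t'%:C t) = conjc (g t).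
  by apply: cvgr_limr; apply: evlim_cvgr; exact: G2.
rewrite E2.
have -> : (fun s => k s t - limr (fun r => k s r%:C) * conjc (g t) / ip g g) =
    (fun s => k s t + (- (conjc (g t) / ip g g)) * g s).
  by apply: funext => s; rewrite E1; field.
have Hkt := Hk t.
split.
  apply/Hinf_iff; split; first by apply: (HD hs Hkt); exact: (HZ hs _ Hg).
  rewrite (ipD hs) ?(ipZ hs) //; last exact: (HZ hs _ Hg).
  rewrite (ipC hs Hg Hkt) (krep ht Hg).
  by field.
move=> f /Hinf_iff [Hf ef].
rewrite (ipDr hs) ?(ipZr hs) //; last exact: (HZ hs _ Hg).
by rewrite ef mulr0 addr0 krep.
Qed.

End G.
End Main.

Theorem cor_main (rho : R) (a : nat -> nat -> R[i])
    (H : set (R[i] -> R[i])) (ip : (R[i] -> R[i]) -> (R[i] -> R[i]) -> R[i]) :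
  dirichlet_series_kernel rho a ->
  psd_kernel rho (dkernel rho a) ->
  is_rkhs rho (dkernel rho a) H ip ->
  closed_subspace H ip (H_inf H) /\
  (limr (fun t => limr (fun r => dkernel rho a t%:C r%:C)) != 0 ->
   reproducing_kernel_of rho (H_inf H) ip
     (fun s u => dkernel rho a s u
        - limr (fun r => dkernel rho a s r%:C)
          * limr (fun t => dkernel rho a t%:C u)
          / limr (fun t => limr (fun r => dkernel rho a t%:C r%:C)))).
Proof.
move=> Hd _ Hrk.
have [g Hg Hgl] := g_exists Hd Hrk.
split; first exact: (part1 Hrk Hg Hgl).
exact: (part2 Hrk Hg Hgl).
Qed.
End S.

Unset Implicit Arguments.
Unset Strict Implicit.

Theorem corollary2p7 (R : realType) (rho : R) (a : nat -> nat -> R[i])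
    (H : set (R[i] -> R[i])) (ip : (R[i] -> R[i]) -> (R[i] -> R[i]) -> R[i]) :
  dirichlet_series_kernel rho a ->
  psd_kernel rho (dkernel rho a) ->
  is_rkhs rho (dkernel rho a) H ip ->
  closed_subspace H ip (H_inf H) /\
  (limr (fun t => limr (fun r => dkernel rho a t%:C r%:C)) != 0 ->
   reproducing_kernel_of rho (H_inf H) ip
     (fun s u => dkernel rho a s u
        - limr (fun r => dkernel rho a s r%:C)
          * limr (fun t => dkernel rho a t%:C u)
          / limr (fun t => limr (fun r => dkernel rho a t%:C r%:C)))).
Proof. exact: cor_main. Qed.
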